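(* Let $\Gamma$ be a minimal subgroup of $\mathrm{Homeo}_+(S^1)$ admitting no $\Gamma$-invariant probability measure on $S^1$, and let $\theta\in\mathrm{Homeo}_+(S^1)$ be a periodic homeomorphism commuting with every element of $\Gamma$ such that for every $x\in S^1$ every closed interval contained in $[x,\theta(x)[$ is $\Gamma$-contractible (with $[x,\theta(x)[$ meaning the whole circle if $\theta=\mathrm{id}$). Let $\kappa$ be the period of $\theta$ and let $I_0\subset S^1$ be a closed interval such that $I_0,\theta(I_0),\dots,\theta^{\kappa-1}(I_0)$ are pairwise disjoint. Then there exists $h\in\Gamma$ such that $$\emptyset\neq\mathrm{Fix}(h)\subset \bigcup_{j=0}^{\kappa-1}\mathrm{Int}(\theta^j(I_0))\quad\text{and}\quad h\Big(S^1\setminus\bigcup_{j=0}^{\kappa-1}\mathrm{Int}(\theta^j(I_0))\Big)\subset\bigcup_{j=0}^{\kappa-1}\mathrm{Int}(\theta^j(I_0)).$$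
   Context: $\Gamma$ is minimal if every orbit is dense. A closed interval $I\subset S^1$ is $\Gamma$-contractible if there is a sequence $(g_n)$ in $\Gamma$ with the length of $g_n(I)$ tending to $0$. $[x,\theta(x)[$ denotes the half-open arc from $x$ to $\theta(x)$ in the positive direction. $\mathrm{Fix}(h)$ is the fixed point set of $h$. *)

(* Defs.v *)
(* the circle S^1 = R/Z, handled through lifts to R. *)
From Stdlib Require Import Reals Lra ZArith.
Open Scope R_scope.

Definition ceq (x y : R) : Prop := exists k : Z, y = x + IZR k.

(* F : R -> R is a lift of an orientation-preserving homeomorphism of S^1 *)
Definition is_lift (F : R -> R) : Prop :=
  continuity F /\ (forall x y, x < y -> F x < F y) /\ (forall x, F (x + 1) = F x + 1).

Definition heq (F G : R -> R) : Prop := forall x, ceq (F x) (G x).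

(* A subgroup of Homeo_+(S^1), given as the set of all lifts of its elements. *)
Definition is_subgroup (G : (R -> R) -> Prop) : Prop :=
  (forall F, G F -> is_lift F) /\
  G (fun x => x) /\
  (forall F H, G F -> G H -> G (fun x => F (H x))) /\
  (forall F, G F -> exists H, G H /\ forall x, H (F x) = x) /\
  (forall F F', G F -> is_lift F' -> heq F F' -> G F').

Definition minimal (G : (R -> R) -> Prop) : Prop :=
  forall x y eps, 0 < eps ->
    exists F k, G F /\ Rabs (F x - (y + IZR k)) < eps.

(* subsets of S^1 = subsets of R invariant under x |-> x+1 *)
Definition periodic_set (A : R -> Prop) : Prop := forall x, A x <-> A (x + 1).

Inductive borel : (R -> Prop) -> Prop :=
| borel_open : forall U, open_set U -> periodic_set U -> borel U
| borel_compl : forall A, borel A -> borel (fun x => ~ A x)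
| borel_union : forall A : nat -> R -> Prop,
    (forall n, borel (A n)) -> borel (fun x => exists n, A n x)
| borel_ext : forall A B, (forall x, A x <-> B x) -> borel A -> borel B.

(* Borel probability measure on S^1 (values on non-Borel sets irrelevant) *)
Definition prob_measure (mu : (R -> Prop) -> R) : Prop :=
  (forall A, borel A -> 0 <= mu A) /\
  mu (fun _ => True) = 1 /\
  (forall A B, (forall x, A x <-> B x) -> mu A = mu B) /\
  (forall A : nat -> R -> Prop,
     (forall n, borel (A n)) ->
     (forall n m x, n <> m -> A n x -> A m x -> False) ->
     infinite_sum (fun n => mu (A n)) (mu (fun x => exists n, A n x))).

Definition invariant_measure (G : (R -> R) -> Prop) (mu : (R -> Prop) -> R) : Prop :=
  forall F A, G F -> borel A -> mu (fun x => A (F x)) = mu A.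

(* closed interval [a, a+l] of S^1 (0 < l < 1) is G-contractible *)
Definition contractible (G : (R -> R) -> Prop) (a l : R) : Prop :=
  exists g : nat -> R -> R, (forall n, G (g n)) /\
    Un_cv (fun n => g n (a + l) - g n a) 0.

Definition in_arc_co (x d y : R) : Prop :=
  exists k : Z, x <= y + IZR k < x + d.

(* y lies in the interior of theta^j([a, a+l]) for some j < kappa *)
Definition in_union_int (T : R -> R) (kappa : nat) (a l y : R) : Prop :=
  exists j t, (j < kappa)%nat /\ 0 < t < l /\ ceq y (Nat.iter j T (a + t)).

(* Main.v *)
Require Import Defs.
From Stdlib Require Import Reals ZArith.
From Stdlib Require Import Lra Lia Classical.
Open Scope R_scope.

Lemma lift_nat F : is_lift F -> forall n x, F (x + INR n) = F x + INR n.
Proof.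
  intros [_ [_ HF]] n; induction n as [|n IH]; intro x.
  - simpl. rewrite !Rplus_0_r. reflexivity.
  - rewrite S_INR. replace (x + (INR n + 1)) with ((x + INR n) + 1) by ring.
    rewrite HF, IH. ring.
Qed.

Lemma lift_Z F : is_lift F -> forall k x, F (x + IZR k) = F x + IZR k.
Proof.
  intros HF k x.
  destruct (Z_le_gt_dec 0 k) as [Hk|Hk].
  - rewrite <- (Z2Nat.id k Hk), <- INR_IZR_INZ. apply lift_nat; auto.
  - assert (Hk' : (0 <= - k)%Z) by lia.
    replace k with (- Z.of_nat (Z.to_nat (- k)))%Z by (rewrite Z2Nat.id; lia).
    rewrite opp_IZR, <- INR_IZR_INZ.
    set (n := Z.to_nat (-k)).
    pose proof (lift_nat F HF n (x + - INR n)) as E.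
    replace (x + - INR n + INR n) with x in E by ring. lra.
Qed.

Lemma ceq_refl x : ceq x x.
Proof. exists 0%Z. simpl. ring. Qed.
Lemma ceq_sym x y : ceq x y -> ceq y x.
Proof. intros [k Hk]. exists (-k)%Z. rewrite opp_IZR. lra. Qed.
Lemma ceq_trans x y z : ceq x y -> ceq y z -> ceq x z.
Proof. intros [k Hk] [m Hm]. exists (k+m)%Z. rewrite plus_IZR. lra. Qed.
Lemma ceq_shift x k : ceq x (x + IZR k).
Proof. exists k. reflexivity. Qed.
Lemma ceq_lift F x y : is_lift F -> ceq x y -> ceq (F x) (F y).
Proof. intros HF [k Hk]. exists k. subst. apply lift_Z; auto. Qed.

Lemma ceq_close x y : ceq x y -> Rabs (y - x) < 1 -> x = y.
Proof.
  intros [k Hk] Ha. replace (y - x) with (IZR k) in Ha by lra.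
  apply Rabs_def2 in Ha. destruct Ha as [H2 H1].
  assert (H1' : IZR (-1) < IZR k) by (replace (IZR (-1)) with (- 1) by reflexivity; lra).
  apply lt_IZR in H1'. apply lt_IZR in H2. assert (k = 0%Z) by lia. subst. simpl in *. lra.
Qed.

Lemma iter_lift T j : is_lift T -> is_lift (Nat.iter j T).
Proof.
  intros HT. induction j as [|j IH].
  - simpl. split; [|split].
    + apply derivable_continuous, derivable_id.
    + auto.
    + auto.
  - destruct HT as [C1 [M1 P1]]. destruct IH as [C2 [M2 P2]].
    split; [|split]; simpl.
    + exact (continuity_comp (Nat.iter j T) T C2 C1).
    + intros x y Hxy. apply M1, M2, Hxy.
    + intros x. rewrite P2, P1. reflexivity.
Qed.

Lemma shift_lift F (k : Z) : is_lift F -> is_lift (fun x => F x + IZR k).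
Proof.
  intros [C [M P]]. split; [|split].
  - apply continuity_plus; [exact C| apply continuity_const; intros ? ?; reflexivity].
  - intros x y H. specialize (M x y H). lra.
  - intros x. rewrite P. ring.
Qed.

Lemma lift_le F x y : is_lift F -> x <= y -> F x <= F y.
Proof.
  intros [_ [M _]] [H|H]. left; auto. subst; lra.
Qed.

Definition dT (T : R -> R) (x : R) := T x - x + IZR (up (x - T x)).

Lemma dT_bounds T x : 0 < dT T x <= 1.
Proof. unfold dT. destruct (archimed (x - T x)). lra. Qed.

Lemma dT_ceq T x : T x + IZR (up (x - T x)) = x + dT T x.
Proof. unfold dT. ring. Qed.

Lemma comm_iter T H : is_lift T -> is_lift H ->
  (forall x, ceq (T (H x)) (H (T x))) ->
  forall j x, ceq (H (Nat.iter j T x)) (Nat.iter j T (H x)).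
Proof.
  intros HT HH Hc j. induction j as [|j IH]; intro x.
  - apply ceq_refl.
  - simpl. eapply ceq_trans. apply ceq_sym, Hc. apply ceq_lift; auto.
Qed.

Fixpoint sq (T : R -> R) (c : R) (j : nat) : R :=
  match j with O => c | S j => sq T c j + dT T (sq T c j) end.

Lemma sq_ceq T c : is_lift T -> forall j, ceq (sq T c j) (Nat.iter j T c).
Proof.
  intros HT j; induction j as [|j IH].
  - apply ceq_refl.
  - simpl. rewrite <- dT_ceq. eapply ceq_trans.
    2: { apply ceq_lift. exact HT. exact IH. }
    apply ceq_sym, ceq_shift.
Qed.

Lemma sq_gt T c : forall j, (1 <= j)%nat -> c < sq T c j.
Proof.
  intros j Hj. induction j as [|j IH]; [lia|]. simpl.
  pose proof (dT_bounds T (sq T c j)).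
  destruct j. simpl in *. lra. assert (c < sq T c (S j)) by (apply IH; lia). lra.
Qed.

Lemma sq_find T c y : forall m, sq T c 0 <= y -> y < sq T c m ->
  exists j, (j < m)%nat /\ sq T c j <= y < sq T c (S j).
Proof.
  intros m; induction m as [|m IH]; intros H0 H1.
  - simpl in *. lra.
  - destruct (Rlt_le_dec y (sq T c m)) as [H|H].
    + destruct (IH H0 H) as [j [Hj Hj']]. exists j. split; [lia|auto].
    + exists m. split; [lia|]. split; auto.
Qed.

Lemma frac_exists z : exists k : Z, 0 <= z + IZR k < 1.
Proof.
  exists (1 - up z)%Z. rewrite minus_IZR. destruct (archimed z). simpl. lra.
Qed.

Lemma lift_diff_le1 F x d : is_lift F -> 0 < d <= 1 -> 0 < F (x + d) - F x <= 1.
Proof.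
  intros HF Hd. destruct HF as [C [M P]]. split.
  - assert (F x < F (x+d)) by (apply M; lra). lra.
  - destruct Hd as [Hd [Hd1|Hd1]].
    + assert (F (x + d) < F (x + 1)) by (apply M; lra). rewrite P in H. lra.
    + subst. rewrite P. lra.
Qed.

Lemma cover_lem T kappa c : is_lift T -> (1 <= kappa)%nat ->
  heq (Nat.iter kappa T) (fun x => x) ->
  forall y, exists j w, (j < kappa)%nat /\ c <= w < c + dT T c /\
     ceq y (Nat.iter j T w).
Proof.
  intros HT Hk Hper y.
  destruct (frac_exists (y - c)) as [k Hk'].
  set (y' := y + IZR k).
  assert (Hsk : ceq (sq T c kappa) c).
  { eapply ceq_trans. apply sq_ceq; auto. apply (Hper c). }
  destruct Hsk as [N HN].
  assert (Hgt := sq_gt T c kappa Hk).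
  assert (HN1 : (N <= -1)%Z).
  { assert (IZR N < IZR 0) by (simpl; lra). apply lt_IZR in H. lia. }
  apply IZR_le in HN1.
  assert (Hy'lt : y' < sq T c kappa).
  { unfold y'. replace (IZR (-1)) with (-1) in HN1 by reflexivity. lra. }
  destruct (sq_find T c y' kappa ltac:(simpl; unfold y'; lra) Hy'lt) as [j [Hj [Hs1 Hs2]]].
  simpl in Hs2.
  set (P := Nat.iter j T).
  assert (HP : is_lift P) by (apply iter_lift; auto).
  destruct (sq_ceq T c HT j) as [r Hr].
  set (Q := fun x => P x + IZR (- r)).
  assert (HQ : is_lift Q) by (apply shift_lift; auto).
  assert (HQc : Q c = sq T c j) by (unfold Q, P; rewrite opp_IZR; lra).
  assert (Hend : Q (c + dT T c) = sq T c j + dT T (sq T c j)).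
  { apply ceq_close.
    - (* both congruent to iter (S j) T c *)
      eapply ceq_trans.
      2:{ eapply ceq_trans. 2: apply ceq_sym, (sq_ceq T c HT (S j)). simpl. apply ceq_refl. }
      unfold Q. eapply ceq_trans. apply ceq_sym, ceq_shift.
      rewrite <- dT_ceq. unfold P.
      eapply ceq_trans. apply ceq_lift. apply iter_lift; auto. apply ceq_sym, ceq_shift.
      rewrite <- Nat.iter_succ_r. apply ceq_refl.
    - pose proof (lift_diff_le1 Q c (dT T c) HQ (dT_bounds T c)).
      pose proof (dT_bounds T (sq T c j)). rewrite HQc in H. apply Rabs_def1; lra. }
  destruct (Req_dec (Q c) y') as [Heq|Hne].
  - exists j, c. split; auto. split. pose proof (dT_bounds T c). lra.
    unfold Q in Heq. apply ceq_trans with y'. apply ceq_shift.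
    rewrite <- Heq. apply ceq_sym, ceq_shift.
  - destruct (IVT (fun x => Q x - y') c (c + dT T c)) as [w [Hw Hw']].
    + apply continuity_minus. apply HQ. apply continuity_const. intros ? ?; reflexivity.
    + pose proof (dT_bounds T c). lra.
    + lra.
    + lra.
    + exists j, w. split; auto. split.
      * split. lra. destruct Hw as [_ [Hw|Hw]]; auto. subst w. lra.
      * apply ceq_trans with y'. apply ceq_shift.
        replace y' with (Q w) by lra. apply ceq_sym, ceq_shift.
Qed.
Lemma union_ceq T kappa a l y y' : ceq y y' -> in_union_int T kappa a l y -> in_union_int T kappa a l y'.
Proof.
  intros Hc [j [t [Hj [Ht Hy]]]]. exists j, t. split; auto. split; auto.
  eapply ceq_trans. apply ceq_sym, Hc. exact Hy.
Qed.

Theorem corollary2p7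
  (G : (R -> R) -> Prop) (T : R -> R) (kappa : nat) (a l : R)
  (HG : is_subgroup G)
  (Hmin : minimal G)
  (Hnomeas : ~ exists mu, prob_measure mu /\ invariant_measure G mu)
  (HT : is_lift T)
  (Hper : (1 <= kappa)%nat /\ heq (Nat.iter kappa T) (fun x => x) /\
          forall n, (1 <= n < kappa)%nat -> ~ heq (Nat.iter n T) (fun x => x))
  (Hcomm : forall F, G F -> heq (fun x => T (F x)) (fun x => F (T x)))
  (Hcontr : forall x d, 0 < d <= 1 -> ceq (T x) (x + d) ->
     forall b m, 0 < m < 1 -> (forall t, 0 <= t <= m -> in_arc_co x d (b + t)) ->
     contractible G b m)
  (Hl : 0 < l < 1)
  (Hdisj : forall i j s t, (i < kappa)%nat -> (j < kappa)%nat -> i <> j ->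
     0 <= s <= l -> 0 <= t <= l -> ~ ceq (Nat.iter i T (a + s)) (Nat.iter j T (a + t))) :
  exists h, G h /\
    (exists y, ceq (h y) y) /\
    (forall y, ceq (h y) y -> in_union_int T kappa a l y) /\
    (forall y, ~ in_union_int T kappa a l y -> in_union_int T kappa a l (h y)).
Proof.
  destruct HG as [Glift [Gid [Gcomp [Ginv Gheq]]]].
  destruct Hper as [Hk1 [Hpk Hpn]].
  set (c' := a + l/4). set (c := a + l/2).
  set (U := up (c - T c)). set (dc := dT T c).
  assert (Hdc := dT_bounds T c). fold dc in Hdc.
  assert (HTc : T c + IZR U = c + dc) by (apply dT_ceq).
  set (e := T c' + IZR U).
  destruct HT as [CT [MT PT]] eqn:HTe.
  assert (He1 : e < c + dc).
  { assert (T c' < T c) by (apply MT; unfold c', c; lra). unfold e. lra. }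
  assert (He2 : c < e).
  { destruct (Rlt_le_dec c e) as [H|H]; auto. exfalso.
    assert (Hz : exists z, c' <= z <= c /\ T z + IZR U = c).
    { destruct H as [H|H].
      - destruct (IVT (fun x => T x + IZR U - c) c' c) as [z [Hz Hz']].
        + apply continuity_minus. apply continuity_plus. exact CT.
          apply continuity_const; intros ? ?; reflexivity.
          apply continuity_const; intros ? ?; reflexivity.
        + unfold c', c; lra.
        + unfold e in H. lra.
        + lra.
        + exists z. split; auto. lra.
      - exists c'. split. unfold c', c; lra. unfold e in H. lra. }
    destruct Hz as [z [Hz Hz']].
    assert (Hzc : ceq (T z) c) by (rewrite <- Hz'; apply ceq_shift).
    destruct (Nat.eq_dec kappa 1) as [Hk|Hk].
    - subst kappa. assert (Hz1 := Hpk z). simpl in Hz1.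
      assert (ceq z c) by (eapply ceq_trans; [apply ceq_sym, Hz1| exact Hzc]).
      apply ceq_close in H0. subst z. lra.
      apply Rabs_def1; unfold c, c' in *; lra.
    - apply (Hdisj 1%nat 0%nat (z - a) (l/2)); try lia; try (unfold c, c' in *; lra).
      simpl. replace (a + (z - a)) with z by ring. exact Hzc. }
  set (eps := Rmin (e - c) (l/2) / 2).
  assert (Heps1 : 0 < eps).
  { unfold eps. apply Rmin_case; lra. }
  assert (Heps2 : eps <= (e - c)/2).
  { unfold eps. pose proof (Rmin_l (e - c) (l/2)). lra. }
  assert (Heps3 : eps <= l/4).
  { unfold eps. pose proof (Rmin_r (e - c) (l/2)). lra. }
  destruct (Hcontr c dc Hdc ltac:(rewrite <- HTc; apply ceq_shift) c (e - c)
      ltac:(lra) ltac:(intros t Ht; exists 0%Z; simpl; lra)) as [g [Gg Hcv]].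
  replace (c + (e - c)) with e in Hcv by ring.
  set (u := fun n => g n c + IZR (1 - up (g n c))).
  destruct (Bolzano_Weierstrass u (fun x => 0 <= x <= 1) (compact_P3 0 1)) as [p Hadh].
  { intros n. unfold u. rewrite minus_IZR. destruct (archimed (g n c)). simpl. lra. }
  destruct (Hmin p (c + eps/2) (eps/8) ltac:(lra)) as [F [k [GF HFp]]].
  destruct (Glift F GF) as [CF _].
  assert (CFp := CF p).
  unfold continuity_pt, continue_in, limit1_in, limit_in in CFp.
  destruct (CFp (eps/8) ltac:(lra)) as [del [Hdel Hd]].
  destruct (Hcv (del/2) ltac:(lra)) as [N HN].
  destruct (Hadh (disc p (mkposreal (del/2) ltac:(lra))) N) as [n [Hn Hun]].
  { exists (mkposreal (del/2) ltac:(lra)). intros ? ?; auto. }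
  unfold disc in Hun. simpl in Hun.
  specialize (HN n Hn). unfold R_dist in HN. rewrite Rminus_0_r in HN.
  set (j := (1 - up (g n c))%Z).
  set (H := fun x => F (g n x) + IZR (j - k)).
  assert (GH : G H).
  { apply (Gheq (fun x => F (g n x))). apply Gcomp; auto.
    apply shift_lift. apply Glift, Gcomp; auto.
    intro x. apply ceq_shift. }
  assert (HlH : is_lift H) by (apply Glift; auto).
  assert (HL : forall x, c <= x <= e -> c + eps/4 < H x < c + 3*eps/4).
  { intros x Hx.
    assert (Hg := Glift _ (Gg n)).
    assert (g n c <= g n x) by (apply lift_le; auto; lra).
    assert (g n x <= g n e) by (apply lift_le; auto; lra).
    assert (0 <= g n e - g n c) by lra.
    rewrite Rabs_right in HN by lra.
    assert (Hz : Rabs (g n x + IZR j - p) < del).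
    { unfold u in Hun. fold j in Hun. apply Rabs_def2 in Hun. apply Rabs_def1; lra. }
    assert (HFz : Rabs (F (g n x + IZR j) - F p) < eps/8).
    { destruct (Req_dec (g n x + IZR j) p) as [E|E].
      - rewrite E. unfold Rminus. rewrite Rplus_opp_r, Rabs_R0. lra.
      - apply (Hd (g n x + IZR j)). split. split. constructor. auto. exact Hz. }
    rewrite lift_Z in HFz by (apply Glift; auto).
    unfold H. rewrite minus_IZR.
    apply Rabs_def2 in HFz. apply Rabs_def2 in HFp. lra. }
  assert (P3 : forall y, ~ in_union_int T kappa a l y -> in_union_int T kappa a l (H y)).
  { intros y Hny.
    destruct (cover_lem T kappa c HT Hk1 Hpk y) as [jj [w [Hj [Hw Hyw]]]].
    fold dc in Hw.
    destruct (Rle_lt_dec w e) as [Hwe|Hwe].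
    - assert (Hb := HL w ltac:(lra)).
      exists jj, (H w - a). split; auto. split. unfold c in Hb; lra.
      replace (a + (H w - a)) with (H w) by ring.
      eapply ceq_trans. apply ceq_lift. exact HlH. exact Hyw.
      apply comm_iter; auto. intro x. apply (Hcomm H GH x).
    - exfalso.
      destruct (IVT (fun x => T x + IZR U - w) c' c) as [z [Hz Hz']].
      + apply continuity_minus. apply continuity_plus. exact CT.
        apply continuity_const; intros ? ?; reflexivity.
        apply continuity_const; intros ? ?; reflexivity.
      + unfold c', c; lra.
      + unfold e in Hwe. lra.
      + lra.
      + assert (Hyz : ceq y (Nat.iter (S jj) T z)).
        { eapply ceq_trans. exact Hyw. rewrite Nat.iter_succ_r.
          apply ceq_lift. apply iter_lift; auto.
          replace w with (T z + IZR U) by lra. apply ceq_sym, ceq_shift. }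
        apply Hny.
        destruct (Nat.eq_dec (S jj) kappa) as [Ek|Ek].
        * exists 0%nat, (z - a). split; [lia|]. split. unfold c, c' in *; lra.
          simpl. replace (a + (z - a)) with z by ring.
          eapply ceq_trans. exact Hyz. rewrite Ek. apply (Hpk z).
        * exists (S jj), (z - a). split; [lia|]. split. unfold c, c' in *; lra.
          replace (a + (z - a)) with z by ring. exact Hyz. }
  exists H. split; auto. split; [|split; auto].
  - destruct (IVT (fun x => x - H x) c e) as [z [Hz Hz']].
    + apply continuity_minus. apply derivable_continuous, derivable_id. apply HlH.
    + exact He2.
    + pose proof (HL c ltac:(lra)). lra.
    + pose proof (HL e ltac:(lra)). lra.
    + exists z. exists 0%Z. simpl. lra.
  - intros y Hy. destruct (classic (in_union_int T kappa a l y)) as [Hu|Hu]; auto.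
    apply (union_ceq _ _ _ _ (H y)); auto.
Qed.
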